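(* Let $p\ge 7$ be a prime. Then $$\sum_{k=1}^{p-1}\frac{H_k^2}{k^2}\equiv -\sum_{1\le i<j<k\le p-1}\frac{1}{ij^2k}\pmod{p}.$$
   Context: $H_n=\sum_{k=1}^n 1/k$. Congruences modulo $p$ are taken in the ring of rationals with denominators not divisible by $p$. *)

(* Defs.v *)
From mathcomp Require Import all_boot all_order all_algebra.
Set Implicit Arguments. Unset Strict Implicit. Unset Printing Implicit Defensive.
Import Order.TTheory GRing.Theory Num.Theory.
Local Open Scope ring_scope.

Definition harm (n : nat) : rat := \sum_(1 <= k < n.+1) (k%:R)^-1.

(* Congruence modulo p in the ring Z_(p) of rationals with denominator
   prime to p: x == y (mod p) iff x - y = p * z with z in Z_(p).
   With x - y in lowest terms (numq / denq coprime), for prime p this means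
   p divides the numerator and does not divide the denominator. *)
Definition ratmod (p : nat) (x y : rat) : Prop :=
  ((p%:Z %| numq (x - y))%Z) /\ ~~ ((p%:Z %| denq (x - y))%Z).

(* Main.v *)
Require Import Defs.
From mathcomp Require Import all_boot all_order all_algebra.
From mathcomp Require Import ring zify.
Import GRing.Theory Num.Theory.
Local Open Scope ring_scope.

Section Alg.
Variables (R : comNzRingType) (x : nat -> R).
Definition P1 m := \sum_(1 <= k < m) x k.
Definition P4 m := \sum_(1 <= k < m) x k ^+ 4.
Definition S m := \sum_(1 <= k < m) (\sum_(1 <= a < k.+1) x a) ^+ 2 * x k ^+ 2.
Definition T m := \sum_(1 <= i < m) \sum_(i.+1 <= j < m) \sum_(j.+1 <= k < m)
   x i * x j ^+ 2 * x k.
Definition D2 m := \sum_(1 <= i < m) \sum_(i.+1 <= j < m) x i * x j ^+ 2.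
Definition A m := \sum_(1 <= j < m) P1 j * x j ^+ 2.
Definition H13 m := \sum_(1 <= k < m) P1 k * x k ^+ 3.

Lemma D2S m : D2 m.+1 = D2 m + P1 m * x m ^+ 2.
Proof.
case: m => [|m]; first by rewrite /D2 /P1 !big_geq // mul0r addr0.
rewrite /D2 big_nat_recr //= (big_geq (m := m.+2)) // addr0 /P1 mulr_suml -big_split /=.
apply: eq_big_nat => i /andP[_ him].
by rewrite big_nat_recr.
Qed.

Lemma D2A m : D2 m = A m.
Proof.
elim: m => [|m IH]; first by rewrite /D2 /A !big_geq.
rewrite D2S IH; case: m {IH} => [|m]; first by rewrite /A /P1 !big_geq // mul0r addr0.
by rewrite /A [in RHS]big_nat_recr.
Qed.

Lemma TS m : T m.+1 = T m + D2 m * x m.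
Proof.
case: m => [|m]; first by rewrite /T /D2 !big_geq // mul0r addr0.
rewrite /T big_nat_recr //= (big_geq (m := m.+2)) // addr0 /D2 mulr_suml -big_split /=.
apply: eq_big_nat => i /andP[_ him].
rewrite big_nat_recr //= (big_geq (m := m.+2)) // addr0 mulr_suml -big_split /=.
apply: eq_big_nat => j /andP[hij hjm].
by rewrite big_nat_recr.
Qed.

Lemma P1S m : P1 m.+1 = P1 m + (if m is 0 then 0 else x m).
Proof. case: m => [|m]; first by rewrite /P1 !big_geq // addr0. by rewrite /P1 big_nat_recr. Qed.

Lemma key m : S m + T m = P1 m * A m + H13 m + P4 m.
Proof.
elim: m => [|m IH]; first by rewrite /S /T /P1 /A /H13 /P4 !big_geq // mul0r !addr0.
rewrite TS D2A; case: m IH => [|m] IH.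
  by rewrite /S /T /P1 /A /H13 /P4 /D2 !big_geq // !mul0r !addr0.
have -> : S m.+2 = S m.+1 + (P1 m.+1 + x m.+1) ^+ 2 * x m.+1 ^+ 2.
  by rewrite /S big_nat_recr //= /P1 [in X in X ^+ 2]big_nat_recr.
have -> : A m.+2 = A m.+1 + P1 m.+1 * x m.+1 ^+ 2 by rewrite /A big_nat_recr.
have -> : H13 m.+2 = H13 m.+1 + P1 m.+1 * x m.+1 ^+ 3 by rewrite /H13 big_nat_recr.
have -> : P4 m.+2 = P4 m.+1 + x m.+1 ^+ 4 by rewrite /P4 big_nat_recr.
have -> : P1 m.+2 = P1 m.+1 + x m.+1 by rewrite /P1 big_nat_recr.
rewrite -[S m.+1](addrK (T m.+1)) IH.
ring.
Qed.

Lemma H13_0 n : (forall k, (0 < k < n)%N -> x (n - k) = - x k) ->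
  P1 n = 0 -> 2 * H13 n = - P4 n.
Proof.
move=> xr P1n.
have P1r : forall k, (k < n)%N -> P1 k.+1 = P1 (n - k).
  elim=> [|k IH] hk; first by rewrite subn0 P1n /P1 big_geq.
  rewrite /P1 big_nat_recr //= -/(P1 k.+1) IH; last by lia.
  have E : (n - k = (n - k.+1).+1)%N by lia.
  rewrite E /P1 big_nat_recr /=; last by lia.
  rewrite xr; last by lia.
  by rewrite subrK.
have : H13 n = - H13 n - P4 n.
  rewrite {1}/H13 big_nat_rev /=.
  rewrite (eq_big_nat _ _ (F2 := fun k => - (P1 k * x k ^+ 3 + x k ^+ 4))).
    by rewrite sumrN big_split /= opprD.
  move=> k /andP[k1 kn].
  have -> : (1 + n - k.+1 = n - k)%N by lia.
  rewrite xr ?k1 ?kn // -P1r; last by lia.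
  rewrite /P1 big_nat_recr //=; ring.
move=> h; transitivity (H13 n + H13 n); first ring. rewrite {1}h; ring.
Qed.

End Alg.

Lemma eqsum_n (R : nmodType) (g : nat -> R) n m : n = m -> \sum_(0 <= i < n) g i = \sum_(0 <= i < m) g i.
Proof. by move->. Qed.

Lemma sumFp p (hp : prime p) (f : 'F_p -> 'F_p) : f 0 = 0 ->
  \sum_(x : 'F_p) f x = \sum_(1 <= k < p) f k%:R.
Proof.
move=> f0.
rewrite (eq_bigr (fun x : 'F_p => f (nat_of_ord x)%:R)); last by move=> i _; rewrite natr_Zp.
rewrite -(big_mkord xpredT (fun i => f i%:R)).
rewrite (@eqsum_n _ _ _ _ (Fp_cast hp)) big_ltn ?prime_gt0 // f0 add0r.
done.
Qed.

Lemma powsum p (hp : prime p) e : (0 < e < p.-1)%N ->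
  \sum_(1 <= k < p) ((k%:R : 'F_p)^-1) ^+ e = 0.
Proof.
move=> /andP[e0 ep].
rewrite -(@sumFp p hp (fun x : 'F_p => x^-1 ^+ e)); last by rewrite invr0 expr0n; case: e e0 ep.
have [g g0 ge] : exists2 g : 'F_p, g != 0 & g ^+ e != 1.
  case: (boolP [exists g : 'F_p, (g != 0) && (g ^+ e != 1)]) => [/existsP[g /andP[g0 ge]] | hne].
    by exists g.
  exfalso.
  have := @max_unity_roots _ e (enum (predC1 (0 : 'F_p))) e0.
  rewrite enum_uniq -cardE cardC1 card_Fp //.
  have -> : all (e.-unity_root) (enum (predC1 (0 : 'F_p))).
    apply/allP => y; rewrite mem_enum /= => y0.
    rewrite unity_rootE.
    move/existsPn: hne => /(_ y). by rewrite inE in y0; rewrite y0 /= negbK.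
  by move=> /(_ isT isT); rewrite leqNgt ep.
set S := \sum_(x : 'F_p) x^-1 ^+ e.
have : S = g^-1 ^+ e * S.
  rewrite {1}/S (reindex_inj (mulfI g0)) /= /S mulr_sumr.
  by apply: eq_bigr => x _; rewrite invfM exprMn.
move/eqP; rewrite -subr_eq0 -{1}[S]mul1r -mulrBl mulf_eq0 => /orP[|/eqP //].
rewrite subr_eq0 eq_sym exprVn invr_eq1 => h.
by rewrite h in ge.
Qed.

Ltac fside := field; repeat (apply/andP; split); try assumption.
Section Tr.
Variables (p : nat) (hp : prime p).
Definition pint (q : rat) := ~~ (p%:Z %| denq q)%Z.
Definition phi (q : rat) : 'F_p := (numq q)%:~R / (denq q)%:~R.

Lemma intF0 (z : int) : ((z%:~R : 'F_p) == 0) = (p%:Z %| z)%Z.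
Proof.
rewrite dvdzE /=.
case: z => n.
  by rewrite -(dvdn_pcharf (pchar_Fp hp)).
by rewrite NegzE rmorphN oppr_eq0 /= -(dvdn_pcharf (pchar_Fp hp)).
Qed.

Lemma pdvdM (a b : int) : ~~ (p%:Z %| a)%Z -> ~~ (p%:Z %| b)%Z -> ~~ (p%:Z %| a * b)%Z.
Proof. by rewrite !dvdzE abszM Euclid_dvdM // => /negPf-> /negPf->. Qed.

Lemma repr (n d : int) : ~~ (p%:Z %| d)%Z ->
  pint (n%:~R / d%:~R) /\ phi (n%:~R / d%:~R) = n%:~R / d%:~R.
Proof.
move=> pd.
have d0 : d != 0 by apply: contraNneq pd => ->; rewrite dvdz0.
set q := n%:~R / d%:~R.
have E : numq q * d = n * denq q.
  apply: (@intr_inj rat); rewrite !intrM numqE /q.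
  have d0' : (d%:~R : rat) != 0 by rewrite intr_eq0.
  by fside.
have dd : (denq q %| d)%Z.
  have : (denq q %| numq q * d)%Z by rewrite E dvdz_mull.
  rewrite Gauss_dvdzr //.
  by rewrite /coprimez /gcdz gcdnC; apply: coprime_num_den.
have pq : pint q.
  by apply: contra pd => h; apply: dvdz_trans h dd.
split => //.
have dF : (d%:~R : 'F_p) != 0 by rewrite intF0.
have qF : ((denq q)%:~R : 'F_p) != 0 by rewrite intF0.
apply/eqP; rewrite /phi eqr_div // -!intrM E.
by rewrite mulrC.
Qed.

Lemma qfrac (a : rat) : a = (numq a)%:~R / (denq a)%:~R.
Proof. by rewrite divq_num_den. Qed.

Lemma pintD a b : pint a -> pint b -> pint (a + b) /\ phi (a + b) = phi a + phi b.
Proof.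
move=> pa pb.
have e : a + b = (numq a * denq b + numq b * denq a)%:~R / (denq a * denq b)%:~R.
  rewrite {1}(qfrac a) {1}(qfrac b) rmorphD !intrM /=.
  have := denq_neq0 a; have := denq_neq0 b.
  rewrite -(intr_eq0 rat (denq a)) -(intr_eq0 rat (denq b)) => h1 h2.
  by rewrite !intrM; fside.
have [h1 h2] := repr (numq a * denq b + numq b * denq a) _ (pdvdM _ _ pa pb).
rewrite e; split => //; rewrite h2 /phi.
have dF : ((denq a)%:~R : 'F_p) != 0 by rewrite intF0.
have dG : ((denq b)%:~R : 'F_p) != 0 by rewrite intF0.
rewrite rmorphD !intrM /=; by fside.
Qed.

Lemma pintM a b : pint a -> pint b -> pint (a * b) /\ phi (a * b) = phi a * phi b.
Proof.
move=> pa pb.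
have e : a * b = (numq a * numq b)%:~R / (denq a * denq b)%:~R.
  rewrite {1}(qfrac a) {1}(qfrac b) !intrM /=.
  have := denq_neq0 a; have := denq_neq0 b.
  rewrite -(intr_eq0 rat (denq a)) -(intr_eq0 rat (denq b)) => h1 h2.
  by fside.
have [h1 h2] := repr (numq a * numq b) _ (pdvdM _ _ pa pb).
rewrite e; split => //; rewrite h2 /phi.
have dF : ((denq a)%:~R : 'F_p) != 0 by rewrite intF0.
have dG : ((denq b)%:~R : 'F_p) != 0 by rewrite intF0.
rewrite !intrM /=; by fside.
Qed.

Lemma pintN a : pint a -> pint (- a) /\ phi (- a) = - phi a.
Proof. by rewrite /pint /phi denqN numqN rmorphN mulNr. Qed.

Lemma pintV k : (0 < k < p)%N -> pint (k%:R^-1) /\ phi (k%:R^-1) = (k%:R : 'F_p)^-1.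
Proof.
move=> /andP[k0 kp].
have pk : ~~ (p%:Z %| k%:Z)%Z.
  by rewrite dvdzE /= gtnNdvd.
have [h1 h2] := repr 1 _ pk.
have e : (k%:R^-1 : rat) = (1%:~R : rat) / (k%:Z)%:~R by rewrite mul1r.
rewrite e; split => //; by rewrite h2 mul1r.
Qed.

Lemma pint_sum (r : seq nat) (F : nat -> rat) : (forall i, i \in r -> pint (F i)) ->
  pint (\sum_(i <- r) F i) /\ phi (\sum_(i <- r) F i) = \sum_(i <- r) phi (F i).
Proof.
elim: r => [|a r IH] h.
  rewrite !big_nil /pint /phi /=; have -> : numq (0:rat) = 0 by []. have -> : denq (0:rat) = 1 by [].
  rewrite mul0r; split => //; rewrite dvdzE /= dvdn1; by case: p hp => [|[|]].
have [h1 h2] := IH (fun i hi => h i (mem_behead (s := a :: r) hi)).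
have ha := h a (mem_head a r).
have [h3 h4] := pintD _ _ ha h1.
by rewrite !big_cons; split => //; rewrite h4 h2.
Qed.

Lemma ratmod_of a b : pint (a - b) -> phi (a - b) = 0 ->
  ((p%:Z %| numq (a - b))%Z) /\ ~~ ((p%:Z %| denq (a - b))%Z).
Proof.
move=> h1 h2; split => //.
move: h2; rewrite /phi => /eqP; rewrite mulf_eq0 invr_eq0 !intF0.
by move: h1; rewrite /pint => /negPf ->; rewrite orbF.
Qed.
End Tr.

Lemma pintX p (hp : prime p) a n : pint p a -> pint p (a ^+ n) /\ phi p (a ^+ n) = phi p a ^+ n.
Proof.
move=> pa; elim: n => [|n [h1 h2]].
  have := @repr p hp 1 1; rewrite divr1 expr0 => -[] //.
    by rewrite dvdzE /= dvdn1; case: p hp {pa} => [|[|]].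
  by move=> h ->; rewrite divr1.
have [h3 h4] := pintM _ hp _ _ h1 pa.
by rewrite !exprSr; split => //; rewrite h4 h2.
Qed.

Theorem lemma2p8 (p : nat) (hp : prime p) (h7 : (7 <= p)%N) :
  ratmod p
    (\sum_(1 <= k < p) (harm k) ^+ 2 / (k%:R) ^+ 2)
    (- \sum_(1 <= i < p) \sum_(i.+1 <= j < p) \sum_(j.+1 <= k < p)
         ((i%:R : rat) * (j%:R) ^+ 2 * k%:R)^-1).
Proof.
set x := fun k : nat => ((k%:R : 'F_p)^-1).
have hV : forall k, (0 < k < p)%N -> pint p (k%:R^-1) /\ phi p (k%:R^-1) = x k.
  by move=> k hk; apply: pintV.
have hH : forall k, (k < p)%N -> pint p (harm k) /\ phi p (harm k) = \sum_(1 <= a < k.+1) x a.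
  move=> k kp.
  have hs : forall i, i \in index_iota 1 k.+1 -> pint p ((fun a : nat => (a%:R : rat)^-1) i).
    by move=> i; rewrite mem_index_iota => /andP[i1 ik]; apply: (proj1 (hV i _)) => //; rewrite i1 /=; lia.
  have [h1 h2] := pint_sum _ hp _ _ hs.
  split => //; rewrite /harm h2.
  apply: eq_big_nat => i /andP[i1 ik]; apply: (proj2 (hV i _)) => //; rewrite i1 /=; lia.
have hX : pint p (\sum_(1 <= k < p) (harm k) ^+ 2 / (k%:R) ^+ 2) /\
          phi p (\sum_(1 <= k < p) (harm k) ^+ 2 / (k%:R) ^+ 2) = S _ x p.
  have ht : forall k, (0 < k < p)%N -> pint p ((harm k) ^+ 2 / (k%:R) ^+ 2) /\
       phi p ((harm k) ^+ 2 / (k%:R) ^+ 2) = (\sum_(1 <= a < k.+1) x a) ^+ 2 * x k ^+ 2.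
    move=> k /andP[k0 kp].
    have [h1 h2] := hH k kp.
    have [h3 h4] := hV k (introT andP (conj k0 kp)).
    have [h5 h6] := pintX _ hp _ 2 h1.
    have [h7' h8] := pintX _ hp _ 2 h3.
    have [h9 h10] := pintM _ hp _ _ h5 h7'.
    by rewrite -exprVn; split => //; rewrite h10 h6 h8 h2 h4.
  have hs : forall i, i \in index_iota 1 p -> pint p ((fun k : nat => (harm k) ^+ 2 / (k%:R : rat) ^+ 2) i).
    by move=> i; rewrite mem_index_iota => hi; apply: (proj1 (ht i _)).
  have [h1 h2] := pint_sum _ hp _ _ hs.
  split => //; rewrite h2 /S.
  by apply: eq_big_nat => i hi; apply: (proj2 (ht i _)).
have hY : pint p (\sum_(1 <= i < p) \sum_(i.+1 <= j < p) \sum_(j.+1 <= k < p)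
         ((i%:R : rat) * (j%:R) ^+ 2 * k%:R)^-1) /\
     phi p (\sum_(1 <= i < p) \sum_(i.+1 <= j < p) \sum_(j.+1 <= k < p)
         ((i%:R : rat) * (j%:R) ^+ 2 * k%:R)^-1) = T _ x p.
  have ht : forall i j k, (0 < i < p)%N -> (0 < j < p)%N -> (0 < k < p)%N ->
      pint p (((i%:R : rat) * (j%:R) ^+ 2 * k%:R)^-1) /\
      phi p (((i%:R : rat) * (j%:R) ^+ 2 * k%:R)^-1) = x i * x j ^+ 2 * x k.
    move=> i j k hi hj hk.
    have [h1 h2] := hV i hi; have [h3 h4] := hV j hj; have [h5 h6] := hV k hk.
    have [h7' h8] := pintX _ hp _ 2 h3.
    have [h9 h10] := pintM _ hp _ _ h1 h7'.
    have [h11 h12] := pintM _ hp _ _ h9 h5.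
    by rewrite !invfM -expr2; split => //; rewrite h12 h10 h8 h2 h4 h6.
  have hk2 : forall i j, (0 < i < p)%N -> (i < j < p)%N ->
      pint p (\sum_(j.+1 <= k < p) ((i%:R : rat) * (j%:R) ^+ 2 * k%:R)^-1) /\
      phi p (\sum_(j.+1 <= k < p) ((i%:R : rat) * (j%:R) ^+ 2 * k%:R)^-1) =
      \sum_(j.+1 <= k < p) x i * x j ^+ 2 * x k.
    move=> i j hi hj.
    have hs : forall k, k \in index_iota j.+1 p -> pint p ((fun k : nat => ((i%:R : rat) * (j%:R) ^+ 2 * k%:R)^-1) k).
      move=> k; rewrite mem_index_iota => hk; apply: (proj1 (ht i j k _ _ _)) => //; lia.
    have [h1 h2] := pint_sum _ hp _ _ hs.
    split => //; rewrite h2.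
    apply: eq_big_nat => k hk; apply: (proj2 (ht i j k _ _ _)) => //; lia.
  have hk1 : forall i, (0 < i < p)%N ->
      pint p (\sum_(i.+1 <= j < p) \sum_(j.+1 <= k < p) ((i%:R : rat) * (j%:R) ^+ 2 * k%:R)^-1) /\
      phi p (\sum_(i.+1 <= j < p) \sum_(j.+1 <= k < p) ((i%:R : rat) * (j%:R) ^+ 2 * k%:R)^-1) =
      \sum_(i.+1 <= j < p) \sum_(j.+1 <= k < p) x i * x j ^+ 2 * x k.
    move=> i hi.
    have hs : forall j, j \in index_iota i.+1 p -> pint p ((fun j : nat => \sum_(j.+1 <= k < p) ((i%:R : rat) * (j%:R) ^+ 2 * k%:R)^-1) j).
      move=> j; rewrite mem_index_iota => hj; apply: (proj1 (hk2 i j _ _)) => //.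
    have [h1 h2] := pint_sum _ hp _ _ hs.
    split => //; rewrite h2.
    apply: eq_big_nat => j hj; apply: (proj2 (hk2 i j _ _)) => //.
  have hs : forall i, i \in index_iota 1 p -> pint p ((fun i : nat => \sum_(i.+1 <= j < p) \sum_(j.+1 <= k < p) ((i%:R : rat) * (j%:R) ^+ 2 * k%:R)^-1) i).
    move=> i; rewrite mem_index_iota => hi; apply: (proj1 (hk1 i _)) => //.
  have [h1 h2] := pint_sum _ hp _ _ hs.
  split => //; rewrite h2 /T.
  apply: eq_big_nat => i hi; apply: (proj2 (hk1 i _)) => //.
have [hX1 hX2] := hX.
have [hY1 hY2] := hY.
have [hD1 hD2] := pintD _ hp _ _ hX1 hY1.
refine (ratmod_of _ hp _ _ _ _); rewrite opprK //.
rewrite hD2 hX2 hY2 key.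
have P1p : P1 _ x p = 0.
  have := @powsum p hp 1; rewrite /P1 /x; under eq_bigr do rewrite expr1.
  by apply; lia.
have P4p : P4 _ x p = 0 by rewrite /P4 /x; apply: powsum => //; lia.
have H13p : H13 _ x p = 0.
  have := @H13_0 _ x p.
  rewrite P1p P4p oppr0.
  have xr : forall k, (0 < k < p)%N -> x (p - k)%N = - x k.
    move=> k /andP[k0 kp]; rewrite /x natrB; last exact: ltnW.
    by rewrite pchar_Fp_0 // sub0r invrN.
  move=> /(_ xr erefl) /eqP; rewrite mulf_eq0 => /orP[|/eqP //].
  by rewrite -(dvdn_pcharf (pchar_Fp hp)) => h; have := @dvdn_leq p 2 isT h; lia.
by rewrite P1p H13p P4p mul0r !addr0.
Qed.
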